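(* Let $\kappa$ be an infinite cardinal and let $(\mathbf{Z}_\kappa,\Sigma)$ be a ring of Euclidean integers for $\kappa$. Then there exist a fine ultrafilter $\mathcal{U}$ on $\kappa$ and an isomorphism of ordered rings $\sigma:\mathbf{Z}_\kappa\to\mathbb{Z}^\kappa/\mathcal{U}$ (the ultrapower of $\mathbb{Z}$ modulo $\mathcal{U}$) such that $\sigma(\Sigma(\mathbf{x}))=[\mathbf{f}_{\mathbf{x}}]_{\mathcal{U}}$ for every $\mathbf{x}\in\mathbb{Z}^\kappa$, where $[\cdot]_{\mathcal U}$ denotes the class modulo $\mathcal U$. Equivalently, $\Sigma(\mathbf{x})\le\Sigma(\mathbf{y})$ iff $\{\delta<\kappa\mid \mathbf{f}_{\mathbf{x}}(\delta)\le\mathbf{f}_{\mathbf{y}}(\delta)\}\in\mathcal{U}$.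
   Context: Every ordinal $\alpha$ has a unique base-2 normal form $\alpha=2^{\alpha_1}+\dots+2^{\alpha_n}$ with $\alpha_1>\dots>\alpha_n$; put $L_\alpha=\{\alpha_1,\dots,\alpha_n\}$. Formal inclusion: $\alpha\sqsubseteq\beta$ iff $L_\alpha\subseteq L_\beta$, $\alpha\sqsubset\beta$ iff $L_\alpha\subsetneq L_\beta$. $\alpha\vee\beta$ is the ordinal $\gamma$ with $L_\gamma=L_\alpha\cup L_\beta$. For $\theta<\kappa$ the cone is $C(\theta)=\{\alpha<\kappa\mid\theta\sqsubset\alpha\}$; a filter on $\kappa$ is fine if it contains all cones. For $\mathbf{x}\in\mathbb{Z}^\kappa$, $\mathbf{f}_{\mathbf{x}}(\alpha)=\sum_{\beta\sqsubseteq\alpha}x_\beta$. A ring of Euclidean integers for $\kappa$ is a discretely ordered commutative integral domain $\mathbf{Z}_\kappa$ containing $\mathbb{Z}$ as an ordered subring, together with a map $\Sigma:\mathbb{Z}^\kappa\to\mathbf{Z}_\kappa$, written $\Sigma(\mathbf{x})=\sum_\alpha x_\alpha$, such that: (0) if only finitely many $x_\alpha\neq0$ then $\sum_\alpha x_\alpha$ is the ordinary finite sum; (RA) every element of $\mathbf{Z}_\kappa$ is $\sum_\alpha x_\alpha$ for some $\mathbf{x}\in\mathbb{Z}^\kappa$; (LA) $u\sum_\alpha x_\alpha+v\sum_\alpha y_\alpha=\sum_\alpha(ux_\alpha+vy_\alpha)$ for all $u,v\in\mathbb{Z}$, $\mathbf{x},\mathbf{y}\in\mathbb{Z}^\kappa$;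 (CA) if there is $\theta<\kappa$ with $\mathbf{f}_{\mathbf{x}}(\delta)\le\mathbf{f}_{\mathbf{y}}(\delta)$ for all $\delta<\kappa$ with $\theta\sqsubseteq\delta$, then $\sum_\alpha x_\alpha\le\sum_\alpha y_\alpha$; (PA) $(\sum_\alpha x_\alpha)(\sum_\beta y_\beta)=\sum_\gamma z_\gamma$ where $z_\gamma=\sum_{\alpha\vee\beta=\gamma}x_\alpha y_\beta$. *)

(* Defs.v *)
From HB Require Import structures.
From mathcomp Require Import all_boot all_order all_algebra.
From mathcomp Require Export finmap.
Set Implicit Arguments. Unset Strict Implicit. Unset Printing Implicit Defensive.
Import Order.TTheory GRing.Theory Num.Theory.
Local Open Scope ring_scope.

(* Ordinals alpha < kappa are represented by their base-2 exponent sets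
   L_alpha, which are exactly the finite subsets of kappa.
   K is the underlying set of kappa; the index type is {fset K}. *)

Section Euclid.
Variable K : choiceType.
Notation I := {fset K}.

Definition fsqsub (a b : I) : bool := (a `<=` b)%fset && (a != b).
Definition cone (theta : I) : I -> Prop := fun a => fsqsub theta a.

Definition fx (x : I -> int) (a : I) : int := \sum_(b <- fpowerset a) x b.

(* z_gamma = sum_{alpha \/ beta = gamma} x_alpha y_beta (finite: alpha,beta <= gamma) *)
Definition prodseq (x y : I -> int) (g : I) : int :=
  \sum_(a <- fpowerset g) \sum_(b <- fpowerset g | (a `|` b)%fset == g) x a * y b.

Definition is_ultrafilter (T : Type) (U : (T -> Prop) -> Prop) : Prop :=
  [/\ U (fun _ => True),
      ~ U (fun _ => False),
      (forall A B : T -> Prop, U A -> U B -> U (fun t => A t /\ B t)),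
      (forall A B : T -> Prop, (forall t, A t -> B t) -> U A -> U B) &
      (forall A : T -> Prop, U A \/ U (fun t => ~ A t))].

Definition fine (U : (I -> Prop) -> Prop) : Prop := forall theta, U (cone theta).

(* A ring of Euclidean integers for kappa on the discretely ordered
   commutative integral domain R (Z embedded by z |-> z%:~R). *)
Definition discretely_ordered (R : realDomainType) : Prop :=
  forall r : R, 0 < r -> 1 <= r.

Definition euclidean_sum (R : realDomainType) (S : (I -> int) -> R) : Prop :=
  [/\ (forall (x : I -> int) (s : seq I), uniq s ->
          (forall a, a \notin s -> x a = 0%R) -> S x = \sum_(a <- s) (x a)%:~R),
      (forall r : R, exists x, S x = r),
      (forall (u v : int) (x y : I -> int),
          u%:~R * S x + v%:~R * S y = S (fun a => u * x a + v * y a)),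
      (forall x y : I -> int,
          (exists theta : I, forall d : I, (theta `<=` d)%fset -> fx x d <= fx y d) ->
          S x <= S y) &
      (forall x y : I -> int, S x * S y = S (prodseq x y))].

(* Ultrapower Z^I/U, described through representatives:
   two functions are identified / compared when they agree / compare on a U-set. *)
Definition ueq (U : (I -> Prop) -> Prop) (f g : I -> int) : Prop := U (fun d => f d = g d).
Definition ule (U : (I -> Prop) -> Prop) (f g : I -> int) : Prop := U (fun d => f d <= g d).

(* sigma : R -> Z^I/U given by a choice of representative sigma r : I -> int;
   it is an isomorphism of ordered rings onto the ultrapower. *)
Definition ordered_ring_iso_ultrapower (R : realDomainType)
    (U : (I -> Prop) -> Prop) (sigma : R -> I -> int) : Prop :=
  [/\ (forall r s, ueq U (sigma (r + s)) (fun d => sigma r d + sigma s d)),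
      (forall r s, ueq U (sigma (r * s)) (fun d => sigma r d * sigma s d)),
      ueq U (sigma 1) (fun _ => 1),
      (forall r s, ueq U (sigma r) (sigma s) -> r = s) /\
      (forall g : I -> int, exists r, ueq U (sigma r) g) &
      (forall r s, r <= s <-> ule U (sigma r) (sigma s))].
End Euclid.

(* Main.v *)
Require Import Defs.
From mathcomp Require Import all_boot all_order all_algebra finmap.
From Stdlib Require Import ClassicalEpsilon.
Import Order.TTheory GRing.Theory Num.Theory.
Local Open Scope ring_scope.

Section Comb.
Variable K : choiceType.
Notation I := {fset K}.

Lemma fx_add (x y : I -> int) a : fx (fun b => x b + y b) a = fx x a + fx y a.
Proof. by rewrite /fx big_split. Qed.

Fixpoint xf (g : I -> int) (n : nat) (a : I) : int :=
  match n with
  | 0%N => g a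
  | n.+1 => g a - \sum_(b <- fpowerset a | b != a) xf g n b
  end.

Lemma card_prop {a b : I} : b \in fpowerset a -> b != a -> (#|` b| < #|` a|)%N.
Proof.
by rewrite fpowersetE => sba nba; apply: fproper_ltn_card; rewrite fproperEneq nba.
Qed.

Lemma xf_stab g n a : (#|` a| <= n)%N -> xf g n.+1 a = xf g n a.
Proof.
elim: n a => [|n IH] a ha.
  rewrite /= big1_seq ?subr0 // => b /andP[bna bin].
  by have := card_prop bin bna; rewrite ltnNge (leq_trans ha).
rewrite [LHS]/= [RHS]/=; congr (_ - _).
rewrite big_seq_cond [RHS]big_seq_cond; apply: eq_bigr => b /andP[bin bna].
apply: IH; have := card_prop bin bna; move=> h; rewrite -ltnS (leq_trans h) //.
Qed.

Lemma xf_add g n k a : (#|` a| <= n)%N -> xf g (n + k) a = xf g n a.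
Proof.
move=> ha; elim: k => [|k IH]; first by rewrite addn0.
by rewrite addnS xf_stab ?IH // (leq_trans ha) ?leq_addr.
Qed.

Lemma xfS g n a : xf g n.+1 a = g a - \sum_(b <- fpowerset a | b != a) xf g n b.
Proof. by []. Qed.

Lemma fx_surj (g : I -> int) : exists x, forall a, fx x a = g a.
Proof.
exists (fun a => xf g #|` a| a) => a.
have E : forall b, b \in fpowerset a -> xf g #|` b| b = xf g (#|` a|.+1) b.
  move=> b; rewrite fpowersetE => /fsubset_leq_card h.
  rewrite -(subnKC (leqW h)) xf_add //.
rewrite /fx big_seq [X in X = _](eq_bigr _ E) -big_seq.
rewrite (bigD1_seq a) ?fset_uniq ?fpowersetE ?fsubset_refl //.
rewrite xfS -[RHS](subrK (\sum_(b <- fpowerset a | b != a) xf g #|` a| b) (g a)); congr (_ + _).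
rewrite big_seq_cond [RHS]big_seq_cond; apply: eq_bigr => b /andP[bin bna].
rewrite xf_stab //; have := card_prop bin bna; exact: ltnW.
Qed.

Lemma sub_pow (F : I -> int) {g a : I} : (g `<=` a)%fset ->
  \sum_(c <- fpowerset g) F c = \sum_(c <- fpowerset a | (c `<=` g)%fset) F c.
Proof.
move=> ga; rewrite -[RHS]big_filter; apply: perm_big; apply: uniq_perm.
- exact: fset_uniq.
- by rewrite filter_uniq // fset_uniq.
move=> c; rewrite mem_filter !fpowersetE.
by apply/idP/andP => [h|[]//]; split=> //; apply: fsubset_trans ga.
Qed.

Lemma fx_mul (x y : I -> int) a : fx (prodseq x y) a = fx x a * fx y a.
Proof.
have step1 : forall g, g \in fpowerset a ->
   prodseq x y g = \sum_(c <- fpowerset a) \sum_(d <- fpowerset a)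
       (if (c `|` d)%fset == g then x c * y d else 0).
  move=> g; rewrite fpowersetE => ga.
  rewrite /prodseq (sub_pow _ ga) big_mkcond; apply: eq_bigr => c _.
  rewrite big_mkcond /= (sub_pow _ ga) big_mkcond.
  case: ifP => cg.
    apply: eq_bigr => d _; case: ifP => // dg; case: ifP => // /eqP E.
    by move: dg; rewrite -E fsubsetUr.
  rewrite big1 // => d _; case: ifP => // /eqP E.
  by move: cg; rewrite -E fsubsetUl.
rewrite /fx big_seq (eq_bigr _ step1) -big_seq exchange_big.
rewrite big_distrl; apply: eq_big_seq => c cin /=.
rewrite exchange_big big_distrr; apply: eq_big_seq => d din /=.
rewrite (bigD1_seq (c `|` d)%fset) ?fset_uniq //=; last first.
  by move: cin din; rewrite !fpowersetE fsubUset => -> ->.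
rewrite eqxx big1 ?addr0 // => g; rewrite eq_sym => /negbTE ->; done.
Qed.
End Comb.

Section Main.
Context {K : choiceType} {R : realDomainType} {S : ({fset K} -> int) -> R}.
Context (HS : euclidean_sum S).
Notation I := {fset K}.

Definition mu (g : I -> int) : I -> int :=
  proj1_sig (constructive_indefinite_description _ (@fx_surj K g)).
Lemma muP g a : fx (mu g) a = g a.
Proof. by rewrite /mu; case: constructive_indefinite_description. Qed.

Definition T g := S (mu g).

Lemma S_wd x y : (forall a, fx x a = fx y a) -> S x = S y.
Proof.
have [_ _ _ HCA _] := HS => E.
by apply/le_anti/andP; split; apply: HCA; exists fset0 => d _; rewrite E.
Qed.

Lemma T_fx x : T (fx x) = S x.
Proof. by apply: S_wd => a; rewrite muP. Qed.

Lemma T_ext g h : (forall a, g a = h a) -> T g = T h.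
Proof. by move=> E; apply: S_wd => a; rewrite !muP. Qed.

Lemma T_mono g h : (exists th : I, forall d, (th `<=` d)%fset -> g d <= h d) -> T g <= T h.
Proof.
have [_ _ _ HCA _] := HS => -[th Hth]; apply: HCA; exists th => d /Hth.
by rewrite !muP.
Qed.

Lemma T_add g h : T (fun d => g d + h d) = T g + T h.
Proof.
have [_ _ HLA _ _] := HS.
have := HLA 1 1 (mu g) (mu h); rewrite !mul1r /T => ->.
apply: S_wd => a; rewrite muP /fx; under [RHS]eq_bigr do rewrite !mul1r.
by rewrite big_split /= -!/(fx _ _) !muP.
Qed.

Lemma T_mul g h : T (fun d => g d * h d) = T g * T h.
Proof.
have [_ _ _ _ HPA] := HS.
rewrite /T HPA; apply: S_wd => a; by rewrite fx_mul !muP.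
Qed.

Lemma T_onto r : exists g, T g = r.
Proof. have [_ HRA _ _ _] := HS; have [x <-] := HRA r; exists (fx x); exact: T_fx. Qed.

Lemma T_one : T (fun _ => 1) = 1.
Proof.
have [g Hg] := T_onto 1.
have := T_mul (fun _ => 1) g; rewrite Hg mulr1 => <-.
by rewrite -Hg; apply: T_ext => a; rewrite mul1r.
Qed.

Lemma T_zero : T (fun _ => 0) = 0.
Proof.
have E := T_add (fun _ => 0) (fun _ => 0).
have E2 : T (fun d => (fun _ => 0) d + (fun _ => 0) d) = T (fun _ => 0 : int).
  by apply: T_ext => a; rewrite addr0.
rewrite E2 in E; have := congr1 (fun z => z - T (fun _ => 0)) E.
by rewrite subrr addrK => <-.
Qed.

Lemma idem (e : R) : e * e = e -> e = 0 \/ e = 1.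
Proof.
move=> h; have : e * (e - 1) == 0 by rewrite mulrBr mulr1 h subrr.
by rewrite mulf_eq0 subr_eq0 => /orP[] /eqP; [left|right].
Qed.

Definition chi (A : I -> Prop) : I -> int :=
  fun d => if excluded_middle_informative (A d) then 1 else 0.

Definition UU (A : I -> Prop) : Prop := T (chi A) = 1.

Lemma chi01 A : T (chi A) = 0 \/ T (chi A) = 1.
Proof.
apply: idem; rewrite -T_mul; apply: T_ext => a; rewrite /chi.
by case: excluded_middle_informative.
Qed.

Lemma U_compl {A} : ~ UU A -> UU (fun t => ~ A t).
Proof.
move=> nU; have [h0|//] := chi01 A.
have := T_add (chi A) (chi (fun t => ~ A t)).
rewrite h0 add0r /UU => <-; rewrite -T_one; apply: T_ext => a; rewrite /chi.
by do 2 case: excluded_middle_informative => //.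
Qed.

Lemma chi_mul A g : UU A -> T (fun d => chi A d * g d) = T g.
Proof. by move=> h; rewrite T_mul h mul1r. Qed.

Lemma U_up {A B} : (forall t, A t -> B t) -> UU A -> UU B.
Proof.
move=> AB hA; have : T (chi A) <= T (chi B).
  apply: T_mono; exists fset0 => d _; rewrite /chi.
  case: (excluded_middle_informative (A d)) => a; case: (excluded_middle_informative (B d)) => b //.
  by case: b; apply: AB.
rewrite hA; have [->|//] := chi01 B; by rewrite ler10.
Qed.

Lemma U_and {A B} : UU A -> UU B -> UU (fun t => A t /\ B t).
Proof.
move=> hA hB; rewrite /UU -[1]mulr1 -{1}hA -hB -T_mul; apply: T_ext => a.
rewrite /chi; case: (excluded_middle_informative (A a)) => ha; case: (excluded_middle_informative (B a)) => hb;
  case: excluded_middle_informative => //= -[]; by [].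
Qed.

Lemma U_le g h : T g <= T h <-> UU (fun d => g d <= h d).
Proof.
split; last first.
  move=> hU; rewrite -(@chi_mul _ g hU) -(@chi_mul _ h hU).
  apply: T_mono; exists fset0 => d _; rewrite /chi.
  by case: excluded_middle_informative => ?; rewrite ?mul1r ?mul0r.
move=> le; case: (excluded_middle_informative (UU (fun d => g d <= h d))) => // nU.
have hN := U_compl nU; exfalso.
have : T h + 1 <= T g.
  rewrite -T_one -T_add -(@chi_mul _ _ hN) -(@chi_mul _ g hN).
  apply: T_mono; exists fset0 => d _; rewrite /chi.
  case: excluded_middle_informative => nle; rewrite ?mul1r ?mul0r //.
  by rewrite leNgt ltzD1; apply/negP.
move=> h2; have := le_trans h2 le; by rewrite gerDl ler10.
Qed.

Lemma U_eq f g : UU (fun d => f d = g d) <-> T f = T g.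
Proof.
split.
  move=> hU; apply/le_anti/andP; split; apply/U_le; apply: U_up hU => t ->//.
move=> E; have h1 : UU (fun d => f d <= g d) by apply/U_le; rewrite E.
have h2 : UU (fun d => g d <= f d) by apply/U_le; rewrite E.
apply: U_up (U_and h1 h2) => t [a b]; exact/le_anti/andP.
Qed.

End Main.

Lemma fresh (K : choiceType) (e : nat -> K) (inj : injective e) (th : {fset K}) :
  exists k, k \notin th.
Proof.
case: (excluded_middle_informative (exists k, k \notin th)) => // H; exfalso.
have sub : {subset map e (iota 0 #|`th|.+1) <= enum_fset th}.
  move=> x _; apply/negPn/negP => nx; apply: H; by exists x.
have := uniq_leq_size (etrans (map_inj_uniq inj _) (iota_uniq 0 #|`th|.+1)) sub.
by rewrite size_map size_iota ltnn.
Qed.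

Theorem theorem1p2 (K : choiceType)
    (Kinf : exists e : nat -> K, injective e)
    (R : realDomainType) (Rdisc : discretely_ordered R)
    (S : ({fset K} -> int) -> R) (HS : euclidean_sum S) :
  exists (U : ({fset K} -> Prop) -> Prop) (sigma : R -> {fset K} -> int),
    [/\ is_ultrafilter U, fine U,
        ordered_ring_iso_ultrapower U sigma,
        (forall x, ueq U (sigma (S x)) (fx x)) &
        (forall x y, S x <= S y <-> U (fun d => fx x d <= fx y d))].
Proof.
have [H0 HRA HLA HCA HPA] := HS.
pose rep r := proj1_sig (constructive_indefinite_description _ (HRA r)).
have repP : forall r, S (rep r) = r.
  by move=> r; rewrite /rep; case: constructive_indefinite_description.
pose sig r := fx (rep r).
have Tsig : forall r, T (S:=S) (sig r) = r by move=> r; rewrite (T_fx HS).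
exists (UU (S:=S)), sig; split.
- split.
  + rewrite /UU -(T_one HS); apply: (T_ext HS) => a; rewrite /chi.
    by case: excluded_middle_informative.
  + rewrite /UU => h; have : T (S:=S) (fun _ => 0) = 1.
      by rewrite -h; apply: (T_ext HS) => a; rewrite /chi; case: excluded_middle_informative.
    by rewrite (T_zero HS) => /eqP; rewrite eq_sym oner_eq0.
  + by move=> A B; apply: (U_and HS).
  + by move=> A B; apply: (U_up HS).
  + move=> A; case: (excluded_middle_informative (UU (S:=S) A)) => h; [left|right] => //.
    exact: (U_compl HS).
- move=> th; have [e inj] := Kinf; have [k kn] := @fresh _ e inj th.
  have : T (S:=S) (fun _ => 1) <= T (S:=S) (chi (cone th)).
    apply: (T_mono HS); exists (k |` th)%fset => d kd; rewrite /chi.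
    case: excluded_middle_informative => // nc; exfalso; apply: nc.
    rewrite /cone /fsqsub; apply/andP; split.
      by apply: fsubset_trans kd; apply: fsubsetUr.
    apply/eqP => E; move: kd; rewrite -E => /fsubsetP /(_ k (fset1U1 _ _)).
    by rewrite (negbTE kn).
  rewrite (T_one HS) /UU; have [->|//] := chi01 HS (cone th); by rewrite ler10.
- split.
  + by move=> r s; apply/(U_eq HS); rewrite (T_add HS) !Tsig.
  + by move=> r s; apply/(U_eq HS); rewrite (T_mul HS) !Tsig.
  + by apply/(U_eq HS); rewrite (T_one HS) Tsig.
  + split.
      by move=> r s /(U_eq HS); rewrite !Tsig.
    by move=> g; exists (T (S:=S) g); apply/(U_eq HS); rewrite Tsig.
  + by move=> r s; rewrite /ule -(U_le HS) !Tsig.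
- by move=> x; apply/(U_eq HS); rewrite Tsig (T_fx HS).
- by move=> x y; rewrite -(U_le HS) !(T_fx HS).
Qed.
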